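(* Let $\mathbb T$ be the unit circle and $f:\mathbb T\to\mathbb C$ a function in $\mathscr W^{1,2}(\mathbb T)$ with Fourier expansion $f(e^{i\theta})=\sum_{n\in\mathbb Z}c_ne^{in\theta}$. If $$\max_{\mathbb T}|f-c_0|\ge2\min_{\mathbb T}|f-c_0|,$$ then $$\sum_{n\in\mathbb Z}n|c_n|^2\le\frac{99}{100}\sum_{n\in\mathbb Z}n^2|c_n|^2 .$$ *)

(* Defs.v *)
From Stdlib Require Export Reals ZArith.
Open Scope R_scope.

(* Symmetric partial sum  sum_{n=-N}^{N} g n  of a Z-indexed real sequence. *)
Definition zsum (g : Z -> R) (N : nat) : R :=
  sum_f_R0 (fun k => g (Z.of_nat k - Z.of_nat N)%Z) (2 * N).

Definition ZSeries (g : Z -> R) (l : R) : Prop :=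
  Un_cv (fun N => zsum g N) l.

Definition cmod (x y : R) : R := sqrt (x ^ 2 + y ^ 2).

Definition IsMax (h : R -> R) (M : R) : Prop :=
  (exists t, h t = M) /\ (forall t, h t <= M).

Definition IsMin (h : R -> R) (m : R) : Prop :=
  (exists t, h t = m) /\ (forall t, m <= h t).

(* Main.v *)
Require Import Defs.
From Stdlib Require Import Reals Lra Lia Psatz.
Open Scope R_scope.

Lemma zsum_ext (f g : Z -> R) N : (forall n, f n = g n) -> zsum f N = zsum g N.
Proof. intros H; unfold zsum; apply sum_eq; intros; apply H. Qed.

Lemma zsum_minus f g N : zsum (fun n => f n - g n) N = zsum f N - zsum g N.
Proof. unfold zsum; apply minus_sum. Qed.

Lemma zsum_plus f g N : zsum (fun n => f n + g n) N = zsum f N + zsum g N.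
Proof. unfold zsum; apply plus_sum. Qed.

Lemma zsum_scal c f N : zsum (fun n => c * f n) N = c * zsum f N.
Proof. unfold zsum; rewrite scal_sum; apply sum_eq; intros; ring. Qed.

Lemma zsum_le f g N : (forall n, f n <= g n) -> zsum f N <= zsum g N.
Proof. intros H; unfold zsum; apply sum_Rle; intros; apply H. Qed.

Lemma zsum_pos f N : (forall n, 0 <= f n) -> 0 <= zsum f N.
Proof. intros H; unfold zsum; apply cond_pos_sum; intros; apply H. Qed.

Lemma sum_telescope (h : nat -> R) n :
  sum_f_R0 (fun k => h (S k) - h k) n = h (S n) - h 0%nat.
Proof. induction n; simpl; [ring| rewrite IHn; ring]. Qed.

Lemma zsum_telescope (G : Z -> R) N :
  zsum (fun n => G (n + 1)%Z - G n) N = G (Z.of_nat N + 1)%Z - G (- Z.of_nat N)%Z.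
Proof.
  unfold zsum.
  pose proof (sum_telescope (fun k => G (Z.of_nat k - Z.of_nat N)%Z) (2 * N)) as HT.
  cbv beta in HT.
  rewrite (sum_eq _ (fun k => G (Z.of_nat (S k) - Z.of_nat N)%Z - G (Z.of_nat k - Z.of_nat N)%Z)).
  - rewrite HT. f_equal; f_equal; lia.
  - intros i _. f_equal; f_equal; lia.
Qed.

Lemma sum_shift (f : nat -> R) n :
  sum_f_R0 f (S n) = f 0%nat + sum_f_R0 (fun k => f (S k)) n.
Proof. induction n. simpl; ring. rewrite tech5, IHn. simpl. ring. Qed.

Lemma zsum_S g N :
  zsum g (S N) = zsum g N + g (- Z.of_nat (S N))%Z + g (Z.of_nat (S N)).
Proof.
  unfold zsum. replace (2 * S N)%nat with (S (S (2 * N))) by lia.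
  rewrite tech5, sum_shift.
  rewrite (sum_eq (fun k => g (Z.of_nat (S k) - Z.of_nat (S N))%Z)
             (fun k => g (Z.of_nat k - Z.of_nat N)%Z)).
  - replace (Z.of_nat 0 - Z.of_nat (S N))%Z with (- Z.of_nat (S N))%Z by lia.
    replace (Z.of_nat (S (S (2 * N))) - Z.of_nat (S N))%Z with (Z.of_nat (S N)) by lia.
    ring.
  - intros; f_equal; lia.
Qed.

Lemma zsum_growing g : (forall n, 0 <= g n) -> Un_growing (fun N => zsum g N).
Proof. intros H N. rewrite zsum_S. pose proof (H (- Z.of_nat (S N))%Z). pose proof (H (Z.of_nat (S N))). lra. Qed.

Lemma cv_le u l K : Un_cv u l -> (forall n, u n <= K) -> l <= K.
Proof.
  intros Hc Hb. destruct (Rle_dec l K) as [h|h]; auto. exfalso.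
  destruct (Hc (l - K)) as [N HN]; [lra|].
  specialize (HN N (Nat.le_refl N)). unfold R_dist in HN.
  apply Rabs_def2 in HN. specialize (Hb N). lra.
Qed.

Lemma cv_ev u v l : (forall n, (1 <= n)%nat -> u n = v n) -> Un_cv u l -> Un_cv v l.
Proof.
  intros He Hc eps Heps. destruct (Hc eps Heps) as [N HN]. exists (S N).
  intros n Hn. rewrite <- He by lia. apply HN; lia.
Qed.

Lemma cv_sub_const u l c : Un_cv u l -> Un_cv (fun n => u n - c) (l - c).
Proof.
  intros Hc eps Heps. destruct (Hc eps Heps) as [N HN]. exists N.
  intros n Hn. unfold R_dist. replace (u n - c - (l - c)) with (u n - l) by ring.
  apply HN; auto.
Qed.

Lemma CS2 (x y lam mu : nat -> R) n :
  (forall k, 0 <= lam k) -> (forall k, 0 <= mu k) ->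
  (forall k, x k * x k + y k * y k <= lam k * mu k) ->
  sum_f_R0 x n * sum_f_R0 x n + sum_f_R0 y n * sum_f_R0 y n
   <= sum_f_R0 lam n * sum_f_R0 mu n.
Proof.
  intros Hl Hm Hk. induction n.
  - simpl. apply Hk.
  - simpl. set (X := sum_f_R0 x n) in *. set (Y := sum_f_R0 y n) in *.
    set (L := sum_f_R0 lam n) in *. set (Q := sum_f_R0 mu n) in *.
    assert (0 <= L) by (apply cond_pos_sum; auto).
    assert (0 <= Q) by (apply cond_pos_sum; auto).
    specialize (Hk (S n)). specialize (Hl (S n)). specialize (Hm (S n)).
    set (a := x (S n)) in *. set (b := y (S n)) in *.
    set (l := lam (S n)) in *. set (m := mu (S n)) in *.
    assert (H1 : (X*a + Y*b)*(X*a+Y*b) <= (L*Q)*(l*m)).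
    { apply Rle_trans with ((X*X+Y*Y)*(a*a+b*b)).
      - pose proof (Rle_0_sqr (X*b-Y*a)); unfold Rsqr in *; nra.
      - apply Rmult_le_compat; nra. }
    assert (H2 : 2*(X*a+Y*b) <= L*m + l*Q).
    { assert (0 <= L*m + l*Q) by nra.
      destruct (Rle_dec (2*(X*a+Y*b)) 0); [lra|].
      apply Rsqr_incr_0_var; [|lra]. pose proof (Rle_0_sqr (L*m - l*Q)). unfold Rsqr in *; nra. }
    nra.
Qed.

Definition H (c n : Z) : R := if Z.leb c n then 1 else 0.
Definition dl (c n : Z) : R := H (c + 1) (n + 1) - H (c + 1) n.

Lemma dl_eq c : dl c c = 1.
Proof. unfold dl, H. rewrite (proj2 (Z.leb_le _ _)) by lia. rewrite (proj2 (Z.leb_gt _ _)) by lia. ring. Qed.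

Lemma dl_neq c n : n <> c -> dl c n = 0.
Proof. intros. unfold dl, H. destruct (Z.leb_spec (c+1) (n+1)), (Z.leb_spec (c+1) n); try ring; lia. Qed.

Lemma zsum_dl c N : zsum (dl c) N = H (c + 1) (Z.of_nat N + 1) - H (c + 1) (- Z.of_nat N).
Proof. unfold dl. apply (zsum_telescope (H (c+1))). Qed.

Lemma zsum_dl0 N : zsum (dl 0) N = 1.
Proof. rewrite zsum_dl. unfold H. rewrite (proj2 (Z.leb_le _ _)) by lia. rewrite (proj2 (Z.leb_gt _ _)) by lia. ring. Qed.

Lemma zsum_dl1 N : (1 <= N)%nat -> zsum (dl 1) N = 1.
Proof. intros. rewrite zsum_dl. unfold H. rewrite (proj2 (Z.leb_le _ _)) by lia. rewrite (proj2 (Z.leb_gt _ _)) by lia. ring. Qed.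

Lemma zsum_dl1_le N : zsum (dl 1) N <= 1.
Proof. rewrite zsum_dl. unfold H. destruct (Z.leb _ _), (Z.leb _ _); lra. Qed.

Definition F (n : Z) : R :=
  if Z.leb n 0 then - / (IZR n - 1) else if Z.eqb n 1 then 1 else 2 - / (IZR n - 1).
Definition lam (n : Z) : R := F (n + 1) - F n.

Lemma inv_fact x : x <> 0 -> / x * x = 1.
Proof. apply Rinv_l. Qed.

Lemma F_bounds n : 0 <= F n <= 2.
Proof.
  unfold F. destruct (Z.leb_spec n 0).
  - assert (Hn : IZR n <= 0) by (apply IZR_le; lia).
    assert (h := inv_fact (IZR n - 1) ltac:(lra)). nra.
  - destruct (Z.eqb_spec n 1). lra.
    assert (Hn : 2 <= IZR n) by (apply IZR_le; lia).
    assert (h := inv_fact (IZR n - 1) ltac:(lra)). nra.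
Qed.

Lemma lam_key n : n <> 0%Z -> n <> 1%Z -> lam n * (IZR n * (IZR n - 1)) = 1.
Proof.
  intros h0 h1. unfold lam, F. rewrite plus_IZR.
  destruct (Z.le_gt_cases n (-1)).
  - rewrite (proj2 (Z.leb_le n 0)) by lia. rewrite (proj2 (Z.leb_le (n+1) 0)) by lia.
    assert (Hn : IZR n <= -1) by (apply IZR_le; lia).
    field. split; lra.
  - rewrite (proj2 (Z.leb_gt n 0)) by lia. rewrite (proj2 (Z.leb_gt (n+1) 0)) by lia.
    rewrite (proj2 (Z.eqb_neq n 1)) by lia. rewrite (proj2 (Z.eqb_neq (n+1) 1)) by lia.
    assert (Hn : 2 <= IZR n) by (apply IZR_le; lia).
    field. split; lra.
Qed.

Lemma lam_pos n : 0 <= lam n.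
Proof.
  destruct (Z.eq_dec n 0) as [->|h0].
  { unfold lam, F. simpl. replace (IZR 0 - 1) with (-1) by (simpl; ring).
    replace (/ -1) with (-1) by field. lra. }
  destruct (Z.eq_dec n 1) as [->|h1].
  { unfold lam, F. simpl. replace (IZR 2 - 1) with 1 by (simpl; ring). replace (/ 1) with 1 by field. lra. }
  pose proof (lam_key n h0 h1).
  assert (0 < IZR n * (IZR n - 1)).
  { destruct (Z.le_gt_cases n (-1)).
    - assert (IZR n <= -1) by (apply IZR_le; lia). nra.
    - assert (2 <= IZR n) by (apply IZR_le; lia). nra. }
  nra.
Qed.

Lemma zsum_lam N : zsum lam N <= 2.
Proof. unfold lam. rewrite (zsum_telescope F). pose proof (F_bounds (Z.of_nat N + 1)). pose proof (F_bounds (- Z.of_nat N)). lra. Qed.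

Lemma nn1_pos n : 0 <= IZR n * (IZR n - 1).
Proof.
  destruct (Z.le_gt_cases n 0).
  - assert (IZR n <= 0) by (apply IZR_le; lia). nra.
  - assert (1 <= IZR n) by (apply IZR_le; lia). nra.
Qed.

Lemma cmod_tri u v x y : cmod (u + x) (v + y) <= cmod u v + cmod x y.
Proof.
  unfold cmod. set (s1 := sqrt (u^2+v^2)). set (s2 := sqrt (x^2+y^2)).
  assert (h1 : s1 * s1 = u^2+v^2) by (apply sqrt_sqrt; nra).
  assert (h2 : s2 * s2 = x^2+y^2) by (apply sqrt_sqrt; nra).
  assert (p1 : 0 <= s1) by apply sqrt_pos. assert (p2 : 0 <= s2) by apply sqrt_pos.
  assert (h3 : u*x + v*y <= s1 * s2).
  { destruct (Rle_dec (u*x+v*y) 0); [nra|].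
    apply Rsqr_incr_0_var; [|nra]. unfold Rsqr.
    replace (s1*s2*(s1*s2)) with ((s1*s1)*(s2*s2)) by ring. rewrite h1, h2.
    pose proof (Rle_0_sqr (u*y - v*x)). unfold Rsqr in *. nra. }
  rewrite <- (sqrt_Rsqr (s1 + s2)) by lra.
  apply sqrt_le_1_alt. unfold Rsqr. nra.
Qed.

Lemma cmod_rev u v x y : cmod u v - cmod x y <= cmod (u + x) (v + y).
Proof.
  pose proof (cmod_tri (u + x) (v + y) (-x) (-y)) as H.
  replace (u + x + - x) with u in H by ring. replace (v + y + - y) with v in H by ring.
  unfold cmod in *. replace ((-x)^2 + (-y)^2) with (x^2+y^2) in H by ring. lra.
Qed.

Lemma cmod_rot a1 b1 t :
  cmod (a1 * cos t - b1 * sin t) (a1 * sin t + b1 * cos t) = sqrt (a1^2 + b1^2).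
Proof.
  unfold cmod. f_equal. pose proof (sin2_cos2 t). unfold Rsqr in *. nra.
Qed.

Definition xtm (a b : Z -> R) t n :=
  (a n * cos (IZR n * t) - b n * sin (IZR n * t)) - a 0%Z * dl 0 n
  - (a 1%Z * cos t - b 1%Z * sin t) * dl 1 n.
Definition ytm (a b : Z -> R) t n :=
  (a n * sin (IZR n * t) + b n * cos (IZR n * t)) - b 0%Z * dl 0 n
  - (a 1%Z * sin t + b 1%Z * cos t) * dl 1 n.
Definition mu (a b : Z -> R) n := IZR n * (IZR n - 1) * (a n ^ 2 + b n ^ 2).

Lemma mu_pos a b n : 0 <= mu a b n.
Proof. unfold mu. pose proof (nn1_pos n). apply Rmult_le_pos; nra. Qed.

Lemma term_bound a b t n :
  xtm a b t n * xtm a b t n + ytm a b t n * ytm a b t n <= lam n * mu a b n.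
Proof.
  pose proof (lam_pos n). pose proof (mu_pos a b n).
  unfold xtm, ytm.
  destruct (Z.eq_dec n 0) as [->|h0].
  { rewrite dl_eq, (dl_neq 1 0) by lia. change (IZR 0) with 0.
    rewrite Rmult_0_l, cos_0, sin_0. nra. }
  destruct (Z.eq_dec n 1) as [->|h1].
  { rewrite dl_eq, (dl_neq 0 1) by lia. change (IZR 1) with 1.
    rewrite Rmult_1_l. nra. }
  rewrite (dl_neq 0 n), (dl_neq 1 n) by lia.
  pose proof (lam_key n h0 h1) as HK. pose proof (sin2_cos2 (IZR n * t)).
  unfold mu, Rsqr in *.
  replace (lam n * (IZR n * (IZR n - 1) * (a n ^ 2 + b n ^ 2)))
    with ((lam n * (IZR n * (IZR n - 1))) * (a n ^ 2 + b n ^ 2)) by ring.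
  rewrite HK. nra.
Qed.

Theorem mainTheorem18
  (fr fi : R -> R) (a b : Z -> R) (S2 : R)
  (Hsob : ZSeries (fun n => IZR n ^ 2 * (a n ^ 2 + b n ^ 2)) S2)
  (Hre : forall t, ZSeries
           (fun n => a n * cos (IZR n * t) - b n * sin (IZR n * t)) (fr t))
  (Him : forall t, ZSeries
           (fun n => a n * sin (IZR n * t) + b n * cos (IZR n * t)) (fi t))
  (M m : R)
  (HM : IsMax (fun t => cmod (fr t - a 0%Z) (fi t - b 0%Z)) M)
  (Hm : IsMin (fun t => cmod (fr t - a 0%Z) (fi t - b 0%Z)) m)
  (HMm : M >= 2 * m) :
  exists S1, ZSeries (fun n => IZR n * (a n ^ 2 + b n ^ 2)) S1 /\
             S1 <= 99 / 100 * S2.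
Proof.
  set (g2 := fun n => IZR n ^ 2 * (a n ^ 2 + b n ^ 2)) in *.
  assert (hg2 : forall n, 0 <= g2 n) by (intro n; unfold g2; apply Rmult_le_pos; nra).
  assert (hS2 : forall N, zsum g2 N <= S2).
  { apply growing_ineq; [apply zsum_growing; auto | exact Hsob]. }
  assert (hmu2 : forall n, mu a b n <= 2 * g2 n).
  { intro n. unfold mu, g2. pose proof (nn1_pos (n+1)) as H. rewrite plus_IZR in H.
    assert (0 <= a n ^ 2 + b n ^ 2) by nra. nra. }
  assert (hDg : Un_growing (fun N => zsum (mu a b) N)) by (apply zsum_growing; apply mu_pos).
  destruct (growing_cv _ hDg) as [Dl HDl].
  { exists (2 * S2). intros x [N ->]. apply Rle_trans with (zsum (fun n => 2 * g2 n) N).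
    - apply zsum_le; auto.
    - rewrite zsum_scal. specialize (hS2 N). lra. }
  assert (hDle : forall N, zsum (mu a b) N <= Dl) by (apply growing_ineq; auto).
  assert (hD0 : 0 <= Dl).
  { apply Rle_trans with (zsum (mu a b) 0); auto. apply zsum_pos, mu_pos. }
  assert (hdev : forall t,
    (fr t - a 0%Z - (a 1%Z * cos t - b 1%Z * sin t)) * (fr t - a 0%Z - (a 1%Z * cos t - b 1%Z * sin t))
    + (fi t - b 0%Z - (a 1%Z * sin t + b 1%Z * cos t)) * (fi t - b 0%Z - (a 1%Z * sin t + b 1%Z * cos t))
    <= 2 * Dl).
  { intro t.
    assert (cx : Un_cv (fun N => zsum (xtm a b t) N) (fr t - a 0%Z - (a 1%Z * cos t - b 1%Z * sin t))).
    { apply cv_ev with (fun N => zsum (fun n => a n * cos (IZR n * t) - b n * sin (IZR n * t)) N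
                                 - (a 0%Z + (a 1%Z * cos t - b 1%Z * sin t))).
      - intros N HN. unfold xtm. rewrite !zsum_minus.
        rewrite !zsum_scal, zsum_dl0, zsum_dl1 by auto. ring.
      - replace (fr t - a 0%Z - (a 1%Z * cos t - b 1%Z * sin t))
          with (fr t - (a 0%Z + (a 1%Z * cos t - b 1%Z * sin t))) by ring.
        apply cv_sub_const, Hre. }
    assert (cy : Un_cv (fun N => zsum (ytm a b t) N) (fi t - b 0%Z - (a 1%Z * sin t + b 1%Z * cos t))).
    { apply cv_ev with (fun N => zsum (fun n => a n * sin (IZR n * t) + b n * cos (IZR n * t)) N
                                 - (b 0%Z + (a 1%Z * sin t + b 1%Z * cos t))).
      - intros N HN. unfold ytm. rewrite !zsum_minus.
        rewrite !zsum_scal, zsum_dl0, zsum_dl1 by auto. ring.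
      - replace (fi t - b 0%Z - (a 1%Z * sin t + b 1%Z * cos t))
          with (fi t - (b 0%Z + (a 1%Z * sin t + b 1%Z * cos t))) by ring.
        apply cv_sub_const, Him. }
    eapply cv_le.
    - apply CV_plus; apply CV_mult; eauto.
    - intro N. cbv beta.
      apply Rle_trans with (zsum lam N * zsum (mu a b) N).
      + unfold zsum. apply CS2.
        * intro; apply lam_pos.
        * intro; apply mu_pos.
        * intro; apply term_bound.
      + pose proof (zsum_lam N). pose proof (lam_pos 0).
        assert (0 <= zsum lam N) by (apply zsum_pos, lam_pos).
        pose proof (hDle N). assert (0 <= zsum (mu a b) N) by (apply zsum_pos, mu_pos).
        apply Rle_trans with (2 * zsum (mu a b) N); [|lra].
        apply Rmult_le_compat_r; auto. }
  set (p1 := a 1%Z ^ 2 + b 1%Z ^ 2).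
  assert (hp1 : p1 <= 18 * Dl).
  { destruct HM as [[t1 Ht1] _]. destruct Hm as [[t0 Ht0] _]. cbv beta in Ht1, Ht0.
    pose proof (cmod_tri (a 1%Z * cos t1 - b 1%Z * sin t1) (a 1%Z * sin t1 + b 1%Z * cos t1)
       (fr t1 - a 0%Z - (a 1%Z * cos t1 - b 1%Z * sin t1))
       (fi t1 - b 0%Z - (a 1%Z * sin t1 + b 1%Z * cos t1))) as T1.
    pose proof (cmod_rev (a 1%Z * cos t0 - b 1%Z * sin t0) (a 1%Z * sin t0 + b 1%Z * cos t0)
       (fr t0 - a 0%Z - (a 1%Z * cos t0 - b 1%Z * sin t0))
       (fi t0 - b 0%Z - (a 1%Z * sin t0 + b 1%Z * cos t0))) as T0.
    rewrite !cmod_rot in T1, T0.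
    replace (a 1%Z * cos t1 - b 1%Z * sin t1 + (fr t1 - a 0%Z - (a 1%Z * cos t1 - b 1%Z * sin t1)))
      with (fr t1 - a 0%Z) in T1 by ring.
    replace (a 1%Z * sin t1 + b 1%Z * cos t1 + (fi t1 - b 0%Z - (a 1%Z * sin t1 + b 1%Z * cos t1)))
      with (fi t1 - b 0%Z) in T1 by ring.
    replace (a 1%Z * cos t0 - b 1%Z * sin t0 + (fr t0 - a 0%Z - (a 1%Z * cos t0 - b 1%Z * sin t0)))
      with (fr t0 - a 0%Z) in T0 by ring.
    replace (a 1%Z * sin t0 + b 1%Z * cos t0 + (fi t0 - b 0%Z - (a 1%Z * sin t0 + b 1%Z * cos t0)))
      with (fi t0 - b 0%Z) in T0 by ring.
    rewrite Ht1 in T1. rewrite Ht0 in T0.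
    assert (R1 : forall t, cmod (fr t - a 0%Z - (a 1%Z * cos t - b 1%Z * sin t))
                       (fi t - b 0%Z - (a 1%Z * sin t + b 1%Z * cos t)) <= sqrt (2 * Dl)).
    { intro t. unfold cmod. apply sqrt_le_1_alt. pose proof (hdev t). simpl. lra. }
    pose proof (R1 t1). pose proof (R1 t0).
    assert (h3 : sqrt p1 <= 3 * sqrt (2 * Dl)) by (unfold p1; lra).
    pose proof (sqrt_pos p1).
    assert (e1 : sqrt p1 * sqrt p1 = p1) by (apply sqrt_sqrt; unfold p1; nra).
    assert (e2 : sqrt (2*Dl) * sqrt (2*Dl) = 2*Dl) by (apply sqrt_sqrt; lra).
    nra. }
  assert (hS2b : S2 <= p1 + 2 * Dl).
  { eapply cv_le; [exact Hsob|]. intro N.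
    apply Rle_trans with (zsum (fun n => 2 * mu a b n + p1 * dl 1 n) N).
    - apply zsum_le. intro n. unfold g2, mu.
      destruct (Z.eq_dec n 1) as [->|h1].
      + rewrite dl_eq. change (IZR 1) with 1. unfold p1. lra.
      + rewrite dl_neq by auto. assert (0 <= a n ^ 2 + b n ^ 2) by nra.
        assert (0 <= IZR n * (IZR n - 2)).
        { destruct (Z.le_gt_cases n 0).
          - assert (IZR n <= 0) by (apply IZR_le; lia). nra.
          - assert (2 <= IZR n) by (apply IZR_le; lia). nra. }
        nra.
    - rewrite zsum_plus, !zsum_scal. pose proof (hDle N). pose proof (zsum_dl1_le N).
      assert (0 <= p1) by (unfold p1; nra). nra. }
  exists (S2 - Dl). split.
  - unfold ZSeries. apply cv_ev with (fun N => zsum g2 N - zsum (mu a b) N).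
    + intros N _. rewrite <- zsum_minus. apply zsum_ext. intro n. unfold g2, mu. ring.
    + apply CV_minus; auto.
  - lra.
Qed.
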